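(* Let $n\geq1$, $d\geq 2$, and let $F\in\mathcal{P}_{n,d+1}$ with $F(0)=0$, written as $F=\sum_{c=1}^{d+1}F_c$ with $F_c=((F_c)_1,\dots,(F_c)_n)$ homogeneous of degree $c$. Define $\tilde F:\mathbb{C}^n\times\mathbb{C}^{n\times n}\to\mathbb{C}^n\times\mathbb{C}^{n\times n}$, with variables $z^{(1)}=(z^{(1)}_i)_{1\le i\le n}$ and $z^{(2)}=(z^{(2)}_{ij})_{1\le i,j\le n}$, by $$\tilde F^{(1)}_i(z^{(1)},z^{(2)})=\sum_{j=1}^n z^{(2)}_{ij}z^{(1)}_j,\qquad \tilde F^{(2)}_{ij}(z^{(1)},z^{(2)})=z^{(2)}_{ij}-\sum_{c=1}^{d+1}\frac1c\,\frac{\partial (F_c)_i}{\partial z^{(1)}_j}(z^{(1)}).$$ Then $\tilde F\in\mathcal{P}_{n(n+1),d}$; the map $R(z^{(2)};z^{(1)}):=\tilde F^{(2)}(z^{(1)},z^{(2)})$ is, for each $z^{(1)}$, an invertible translation in $z^{(2)}$ with inverse $R^{-1}(y^{(2)};z^{(1)})_{ij}=y^{(2)}_{ij}+\sum_c\frac1c\frac{\partial (F_c)_i}{\partial z^{(1)}_j}(z^{(1)})$; and $$\tilde F^{(1)}\big(z^{(1)},R^{-1}(0;z^{(1)})\big)=F(z^{(1)})\quad\text{for all }z^{(1)}\in\mathbb{C}^n.$$ Consequently $F\in\mathcal{J}^{\rm lin}_{n}$ if and only if $\tilde F\in\mathcal{J}^{\rm lin}_{n(n+1),d;n}$, and $F\in\mathcal{J}_{n}$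 if and only if $\tilde F\in\mathcal{J}_{n(n+1),d;n}$.
   Context: $\mathcal{P}_{m,d}$ is the set of polynomial maps $\mathbb{C}^m\to\mathbb{C}^m$ of total degree $\le d$; $J_F(z)=(\partial F_j/\partial z_i)_{i,j}$. $\mathcal{J}^{\rm lin}_n$: polynomial maps $\mathbb{C}^n\to\mathbb{C}^n$ with $\det J_F$ a nonzero constant; $\mathcal{J}_n$: polynomial maps $\mathbb{C}^n\to\mathbb{C}^n$ that are bijective with polynomial inverse. For $0\le n'\le m$, split $z=(z_1,z_2)\in\mathbb{C}^{n'}\times\mathbb{C}^{m-n'}$, $F=(F_1,F_2)$, $R(z_2;z_1):=F_2(z_1,z_2)$, and when $R(\cdot;z_1)$ is invertible write $R^{-1}(\cdot;z_1)$ for its inverse. $\mathcal{J}^{\rm lin}_{m,d;n'}$ is the set of $F\in\mathcal{P}_{m,d}$ with $R(\cdot;z_1)\in\mathcal{J}_{m-n'}$ for all $z_1$ and $\det J_F(z_1,R^{-1}(0;z_1))=c\in\mathbb{C}^\times$ constant in $z_1$. $\mathcal{J}_{m,d;n'}$ is the set of $F\in\mathcal{P}_{m,d}$ with $R(\cdot;z_1)\in\mathcal{J}_{m-n'}$ for all $z_1$ and such that $F$ restricted to $F^{-1}(\mathbb{C}^{n'}\times\{0\})$ is a bijection onto $\mathbb{C}^{n'}\times\{0\}$ whose inverse $y_1\mapsto F^{-1}(y_1,0)$ is a polynomial map. Here $m=n(n+1)$ and $n'=n$, the first block being $z^{(1)}$ and the second $z^{(2)}$ (identified with $\mathbb{C}^{n^2}$).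 *)

(* Defs.v *)
From HB Require Import structures.
From mathcomp Require Import all_boot all_order all_algebra.
Set Implicit Arguments. Unset Strict Implicit. Unset Printing Implicit Defensive.
Import Order.TTheory GRing.Theory Num.Theory.
Local Open Scope ring_scope.

Section MPoly.
Variable C : numClosedFieldType.

Definition mpoly (I : finType) := seq (C * {ffun I -> nat}).

Definition mdeg (I : finType) (e : {ffun I -> nat}) : nat := (\sum_(i : I) e i)%N.

Definition meval (I : finType) (p : mpoly I) (x : I -> C) : C :=
  \sum_(t <- p) t.1 * \prod_(i : I) x i ^+ t.2 i.

Definition mderiv (I : finType) (j : I) (p : mpoly I) : mpoly I :=
  map (fun t : C * {ffun I -> nat} =>
     (t.1 *+ t.2 j, [ffun i => if i == j then (t.2 i).-1 else t.2 i])) p.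

Definition mhom (I : finType) (c : nat) (p : mpoly I) : mpoly I :=
  [seq t <- p | mdeg t.2 == c].

Definition mdeg_le (I : finType) (d : nat) (p : mpoly I) : bool :=
  all (fun t => mdeg t.2 <= d)%N p.

Definition polyfun (I : finType) (f : (I -> C) -> C) : Prop :=
  exists p : mpoly I, forall x, f x = meval p x.
Definition polyfun_le (I : finType) (d : nat) (f : (I -> C) -> C) : Prop :=
  exists p : mpoly I, mdeg_le d p /\ forall x, f x = meval p x.
Definition polymap (I J : finType) (F : (I -> C) -> (J -> C)) : Prop :=
  forall j, polyfun (fun x => F x j).
Definition polymap_le (I : finType) (d : nat) (F : (I -> C) -> (I -> C)) : Prop :=
  forall j, polyfun_le d (fun x => F x j).

Definition is_rep (I : finType) (P : I -> mpoly I) (F : (I -> C) -> (I -> C)) : Prop :=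
  forall x j, F x j = meval (P j) x.

(* det J_F(z), J_F(z) = (dF_j/dz_i)_{i,j}, indices enumerated via enum_val *)
Definition jacdet (I : finType) (P : I -> mpoly I) (z : I -> C) : C :=
  \det (\matrix_(a < #|I|, b < #|I|)
          meval (mderiv (enum_val a) (P (enum_val b))) z).

Definition Jlin (I : finType) (F : (I -> C) -> (I -> C)) : Prop :=
  exists P : I -> mpoly I, is_rep P F /\
    exists c : C, c != 0 /\ forall z, jacdet P z = c.

Definition Jaut (I : finType) (F : (I -> C) -> (I -> C)) : Prop :=
  polymap F /\ exists G : (I -> C) -> (I -> C), polymap G /\
    (forall x v, G (F x) v = x v) /\ (forall y v, F (G y) v = y v).

Definition join (A B : finType) (z1 : A -> C) (z2 : B -> C) : (A + B)%type -> C :=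
  fun v => match v with inl a => z1 a | inr b => z2 b end.

Definition Rmap (A B : finType) (F : ((A + B)%type -> C) -> ((A + B)%type -> C))
  (z1 : A -> C) : (B -> C) -> (B -> C) :=
  fun z2 b => F (join z1 z2) (inr b).

(* J^lin_{m,d;n'} with n' = #|A|, m = #|A| + #|B| *)
Definition Jlin_split (A B : finType) (d : nat)
  (F : ((A + B)%type -> C) -> ((A + B)%type -> C)) : Prop :=
  [/\ polymap_le d F,
      (forall z1, Jaut (Rmap F z1)) &
      exists P, is_rep P F /\ exists c : C, c != 0 /\
        forall z1 z2, (forall b, Rmap F z1 z2 b = 0) -> jacdet P (join z1 z2) = c].

Definition J_split (A B : finType) (d : nat)
  (F : ((A + B)%type -> C) -> ((A + B)%type -> C)) : Prop :=
  [/\ polymap_le d F,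
      (forall z1, Jaut (Rmap F z1)) &
      exists G : (A -> C) -> ((A + B)%type -> C), polymap G /\
        (forall y1 v, F (G y1) v = join y1 (fun _ => 0) v) /\
        (forall z, (forall b, F z (inr b) = 0) ->
           forall v, G (fun a => F z (inl a)) v = z v)].

Definition Tn (n : nat) : finType := ('I_n + 'I_n * 'I_n)%type.

Definition dsum (n d : nat) (P : 'I_n -> mpoly 'I_n) (i j : 'I_n) (z1 : 'I_n -> C) : C :=
  \sum_(1 <= c < d.+2) (c%:R)^-1 * meval (mderiv j (mhom c (P i))) z1.

Definition Ftilde (n d : nat) (P : 'I_n -> mpoly 'I_n) (z : Tn n -> C) : Tn n -> C :=
  fun v => match v with
  | inl i => \sum_(j < n) z (inr (i, j)) * z (inl j)
  | inr (i, j) => z (inr (i, j)) - dsum d P i j (fun k => z (inl k))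
  end.

Definition Rinv (n d : nat) (P : 'I_n -> mpoly 'I_n) (z1 : 'I_n -> C)
  (y2 : ('I_n * 'I_n)%type -> C) : ('I_n * 'I_n)%type -> C :=
  fun ij => y2 ij + dsum d P ij.1 ij.2 z1.

End MPoly.

(* Main.v *)
Require Import Defs.
From HB Require Import structures.
From mathcomp Require Import all_boot all_order all_algebra all_fingroup.
Set Implicit Arguments. Unset Strict Implicit. Unset Printing Implicit Defensive.
Import Order.TTheory GRing.Theory Num.Theory.
Local Open Scope ring_scope.
From Stdlib Require Import FunctionalExtensionality.
Definition upd (C : Type) (I : finType) (x : I -> C) (j : I) (t : C) : I -> C :=
  fun i => if i == j then t else x i.

Definition isD (C : numClosedFieldType) (I : finType) (j : I) (f g : (I -> C) -> C) : Prop :=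
  forall x, exists q : {poly C}, (forall t, q.[t] = f (upd x j t)) /\ g x = q^`().[x j].

Lemma poly_fun_inj (C : numClosedFieldType) (q1 q2 : {poly C}) :
  (forall t, q1.[t] = q2.[t]) -> q1 = q2.
Proof.
move=> h; apply/eqP; rewrite -subr_eq0; apply/eqP.
apply: (@roots_geq_poly_eq0 _ _ [seq i%:R | i <- iota 0 (size (q1 - q2))]).
- by apply/allP => x _; rewrite /root hornerD hornerN h subrr.
- rewrite map_inj_uniq ?iota_uniq // => a b /eqP; rewrite eqr_nat => /eqP //.
- by rewrite size_map size_iota.
Qed.

Lemma isD_uniq (C : numClosedFieldType) (I : finType) (j : I) f (g1 g2 : (I -> C) -> C) :
  isD j f g1 -> isD j f g2 -> forall x, g1 x = g2 x.
Proof.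
move=> h1 h2 x; have [q1 [e1 ->]] := h1 x; have [q2 [e2 ->]] := h2 x.
suff -> : q1 = q2 by [].
by apply: poly_fun_inj => t; rewrite e1 e2.
Qed.

Lemma isD_ext (C : numClosedFieldType) (I : finType) (j : I) (f f' g g' : (I -> C) -> C) :
  (forall x, f x = f' x) -> (forall x, g x = g' x) -> isD j f g -> isD j f' g'.
Proof.
move=> ef eg h x; have [q [e1 e2]] := h x; exists q; split.
  by move=> t; rewrite -ef.
by rewrite -eg.
Qed.

Lemma isD_indep (C : numClosedFieldType) (I : finType) (j : I) (f : (I -> C) -> C) :
  (forall x t, f (upd x j t) = f x) -> isD j f (fun _ => 0).
Proof.
move=> h x; exists (f x)%:P; split; first by move=> t; rewrite hornerC h.
by rewrite derivC horner0.
Qed.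

Lemma isD_var (C : numClosedFieldType) (I : finType) (j u : I) :
  isD j (fun x : I -> C => x u) (fun _ => (u == j)%:R).
Proof.
move=> x; case: (eqVneq u j) => [->|ne].
  exists 'X; split; first by move=> t; rewrite hornerX /upd eqxx.
  by rewrite derivX hornerC.
exists (x u)%:P; split; first by move=> t; rewrite hornerC /upd (negbTE ne).
by rewrite derivC horner0.
Qed.

Lemma isD_add (C : numClosedFieldType) (I : finType) (j : I) (f1 f2 g1 g2 : (I -> C) -> C) :
  isD j f1 g1 -> isD j f2 g2 -> isD j (fun x => f1 x + f2 x) (fun x => g1 x + g2 x).
Proof.
move=> h1 h2 x; have [q1 [a1 b1]] := h1 x; have [q2 [a2 b2]] := h2 x.
exists (q1 + q2); split; first by move=> t; rewrite hornerD a1 a2.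
by rewrite derivD hornerD b1 b2.
Qed.

Lemma isD_mul (C : numClosedFieldType) (I : finType) (j : I) (f1 f2 g1 g2 : (I -> C) -> C) :
  isD j f1 g1 -> isD j f2 g2 ->
  isD j (fun x => f1 x * f2 x) (fun x => g1 x * f2 x + f1 x * g2 x).
Proof.
move=> h1 h2 x; have [q1 [a1 b1]] := h1 x; have [q2 [a2 b2]] := h2 x.
have ux : upd x j (x j) = x by apply: functional_extensionality => i; rewrite /upd; case: eqP => [->|].
exists (q1 * q2); split; first by move=> t; rewrite hornerM a1 a2.
have a1' := a1 (x j); have a2' := a2 (x j); rewrite ux in a1' a2'.
by rewrite derivM hornerD !hornerM b1 b2 a1' a2'.
Qed.

Lemma isD_const (C : numClosedFieldType) (I : finType) (j : I) (c : C) :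
  isD j (fun _ => c) (fun _ => 0).
Proof. exact: isD_indep. Qed.

Lemma isD_scale (C : numClosedFieldType) (I : finType) (j : I) (c : C) (f g : (I -> C) -> C) :
  isD j f g -> isD j (fun x => c * f x) (fun x => c * g x).
Proof.
move=> h; apply: isD_ext (isD_mul (isD_const j c) h) => // x; by rewrite mul0r add0r.
Qed.

Lemma isD_sum (C : numClosedFieldType) (I : finType) (j : I) (T : Type) (r : seq T)
  (fs gs : T -> (I -> C) -> C) :
  (forall i, isD j (fs i) (gs i)) ->
  isD j (fun x => \sum_(i <- r) fs i x) (fun x => \sum_(i <- r) gs i x).
Proof.
move=> h; elim: r => [|a r ih].
  by apply: isD_ext (isD_const j 0) => x; rewrite big_nil.
by apply: isD_ext (isD_add (h a) ih) => x; rewrite big_cons.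
Qed.

Lemma isD_term (C : numClosedFieldType) (I : finType) (j : I) (a : C) (e : {ffun I -> nat}) :
  isD j (fun x => a * \prod_(i : I) x i ^+ e i)
        (fun x => (a *+ e j) * \prod_(i : I) x i ^+ [ffun i => if i == j then (e i).-1 else e i] i).
Proof.
move=> x; exists ((a * \prod_(i | i != j) x i ^+ e i) *: 'X^(e j)); split.
  move=> t; rewrite hornerZ hornerXn [in RHS](bigD1 j) //= /upd eqxx.
  rewrite [in RHS](eq_bigr (fun i => x i ^+ e i)); last by move=> i /negbTE ->.
  by rewrite mulrC mulrA [_ * a]mulrC mulrA.
rewrite derivZ derivXn hornerZ hornerMn hornerXn [in LHS](bigD1 j) //= ffunE eqxx.
rewrite [in LHS](eq_bigr (fun i => x i ^+ e i)); last by move=> i /negbTE ne; rewrite ffunE ne.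
set u := x j ^+ _; set P := \prod_(_ | _) _; set m := e j.
by rewrite mulrnAl mulrnAr [u * P]mulrC mulrA.
Qed.

Lemma isD_meval (C : numClosedFieldType) (I : finType) (j : I) (p : mpoly C I) :
  isD j (meval p) (meval (mderiv j p)).
Proof.
apply: isD_ext (isD_sum p (fun t => isD_term j t.1 t.2)) => x.
  by [].
by rewrite /meval /mderiv big_map.
Qed.
Lemma det_reindex (C : comNzRingType) (I : finType) k1 k2 (g1 : 'I_k1 -> I) (g2 : 'I_k2 -> I)
  (f : I -> I -> C) : bijective g1 -> bijective g2 ->
  \det (\matrix_(a < k1, b < k1) f (g1 a) (g1 b)) =
  \det (\matrix_(a < k2, b < k2) f (g2 a) (g2 b)).
Proof.
move=> b1 b2.
have ek : k1 = k2 by rewrite -[k1]card_ord -[k2]card_ord (bij_eq_card b1) (bij_eq_card b2).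
subst k2.
case: b1 => h1 h1K1 h1K2.
have inj : injective (fun a => h1 (g2 a)).
  by apply: inj_comp; [apply: (can_inj h1K2) | apply: bij_inj].
have -> : \matrix_(a < k1, b < k1) f (g2 a) (g2 b) =
   row_perm (perm inj) (col_perm (perm inj) (\matrix_(a < k1, b < k1) f (g1 a) (g1 b))).
  by apply/matrixP => a b; rewrite !mxE !permE /= !h1K2.
rewrite row_permE col_permE !det_mulmx !det_perm odd_permV.
by rewrite [RHS]mulrCA -signr_addb addbb mulr1.
Qed.
Lemma euler_term (C : numClosedFieldType) (I : finType) (a : C) (e : {ffun I -> nat}) (z : I -> C) :
  \sum_(l : I) z l * ((a *+ e l) * \prod_(i : I) z i ^+ [ffun i => if i == l then (e i).-1 else e i] i)
  = (mdeg e)%:R * (a * \prod_(i : I) z i ^+ e i).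
Proof.
rewrite /mdeg natr_sum mulr_suml; apply: eq_bigr => l _.
rewrite (bigD1 l) //= [in RHS](bigD1 l) //= ffunE eqxx.
rewrite (eq_bigr (fun i => z i ^+ e i)); last by move=> i /negbTE ne; rewrite ffunE ne.
set P := \prod_(_ | _) _; case: (e l) => [|m] /=.
  by rewrite mulr0n mul0r mulr0 mul0r.
rewrite exprS; set u := z l ^+ m.
by rewrite -[a *+ _]mulr_natl mulrCA -mulrA !mulrA.
Qed.

Lemma euler (C : numClosedFieldType) (I : finType) (c : nat) (p : mpoly C I) (z : I -> C) :
  all (fun t => mdeg t.2 == c) p ->
  \sum_(l : I) z l * meval (mderiv l p) z = c%:R * meval p z.
Proof.
elim: p => [|t p ih] /=.
  by move=> _; rewrite big1 => [|l _]; rewrite /meval /= big_nil ?mulr0.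
case/andP => /eqP ht hp.
rewrite /meval /mderiv /= big_cons.
rewrite (eq_bigr (fun l => z l * ((t.1 *+ t.2 l) * \prod_(i : I) z i ^+
     [ffun i => if i == l then (t.2 i).-1 else t.2 i] i) + z l * meval (mderiv l p) z)).
  by rewrite big_split /= euler_term ht ih // mulrDr.
by move=> l _; rewrite big_cons mulrDr.
Qed.

Lemma mhom_all (C : numClosedFieldType) (I : finType) c (p : mpoly C I) :
  all (fun t => mdeg t.2 == c) (mhom c p).
Proof. exact: filter_all. Qed.

Lemma meval_decomp (C : numClosedFieldType) (I : finType) N (p : mpoly C I) z :
  mdeg_le N p -> meval p z = \sum_(c < N.+1) meval (mhom c p) z.
Proof.
elim: p => [|t p ih] /=.
  by move=> _; rewrite /meval big_nil big1 // => c _; rewrite /mhom big_nil.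
case/andP => ht hp.
have e : forall c : 'I_N.+1, meval (mhom c (t :: p)) z =
   (if mdeg t.2 == c then t.1 * \prod_(i : I) z i ^+ t.2 i else 0) + meval (mhom c p) z.
  move=> c; rewrite /mhom /=; case: ifP => _; last by rewrite add0r.
  by rewrite /meval big_cons.
rewrite (eq_bigr _ (fun c _ => e c)) big_split /= -ih // /meval big_cons; congr (_ + _).
rewrite -ltnS in ht.
rewrite (bigD1 (Ordinal ht)) //= eqxx [X in _ + X]big1 ?addr0 // => c ne.
case: eqP => // he; case/eqP: ne; apply: val_inj => /=; by rewrite he.
Qed.

Lemma meval_hom0 (C : numClosedFieldType) (I : finType) (p : mpoly C I) z :
  meval (mhom 0 p) z = meval p (fun _ => 0).
Proof.
elim: p => [|t p ih]; first by rewrite /mhom /meval !big_nil.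
have ec : meval (t :: p) (fun _ => 0) = t.1 * \prod_(i : I) (0 : C) ^+ t.2 i + meval p (fun _ => 0).
  by rewrite /meval big_cons.
rewrite ec -ih /mhom /=.
case: (pickP (fun i => t.2 i != 0%N)) => [i hi | none].
  have -> : (mdeg t.2 == 0%N) = false.
    apply/negbTE; rewrite /mdeg sum_nat_eq0; apply/forallP => /(_ i) /=.
    by rewrite (negbTE hi).
  by rewrite (bigD1 i) //= expr0n (negbTE hi) mul0r mulr0 add0r.
have e0 : forall i, t.2 i = 0%N by move=> i; have := none i => /= /negbFE /eqP.
have -> : (mdeg t.2 == 0%N).
  by rewrite /mdeg sum_nat_eq0; apply/forallP => i; rewrite e0.
rewrite /meval big_cons; congr (_ * _ + _).
by apply: eq_bigr => i _; rewrite e0 !expr0.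
Qed.

Lemma euler_dsum (C : numClosedFieldType) (n d : nat) (P : 'I_n -> mpoly C 'I_n)
  (hP : forall i, mdeg_le d.+1 (P i)) (h0 : forall i, meval (P i) (fun _ => 0) = 0) i z1 :
  \sum_(j < n) z1 j * dsum d P i j z1 = meval (P i) z1.
Proof.
transitivity (\sum_(1 <= c < d.+2) meval (mhom c (P i)) z1).
  rewrite /dsum (eq_bigr (fun j => \sum_(1 <= c < d.+2) z1 j * ((c%:R)^-1 *
     meval (mderiv j (mhom c (P i))) z1))); last by move=> j _; rewrite mulr_sumr.
  rewrite exchange_big; apply: eq_big_nat => c /andP [c1 _].
  rewrite (eq_bigr (fun j => c%:R^-1 * (z1 j * meval (mderiv j (mhom c (P i))) z1))); last first.
    by move=> j _; rewrite mulrCA.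
  rewrite -mulr_sumr (euler _ (mhom_all _ _)) mulrA mulVf ?mul1r //.
  by rewrite pnatr_eq0 -lt0n.
rewrite (meval_decomp _ (hP i)) -(big_mkord xpredT (fun c => meval (mhom c (P i)) z1)).
by rewrite big_ltn // meval_hom0 h0 add0r.
Qed.

Lemma part3 (C : numClosedFieldType) (n d : nat) (P : 'I_n -> mpoly C 'I_n)
  (hP : forall i, mdeg_le d.+1 (P i)) (h0 : forall i, meval (P i) (fun _ => 0) = 0) z1 i :
  Ftilde d P (join z1 (Rinv d P z1 (fun _ => 0))) (inl i) = meval (P i) z1.
Proof.
rewrite /Ftilde /join /Rinv /= -(euler_dsum hP h0).
by apply: eq_bigr => j _; rewrite add0r mulrC.
Qed.

Lemma part2a (C : numClosedFieldType) (n d : nat) (P : 'I_n -> mpoly C 'I_n) z1 y2 ij :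
  Rmap (Ftilde d P) z1 (Rinv d P z1 y2) ij = y2 ij.
Proof. by case: ij => i j; rewrite /Rmap /Ftilde /join /Rinv /= addrK. Qed.

Lemma part2b (C : numClosedFieldType) (n d : nat) (P : 'I_n -> mpoly C 'I_n) z1 z2 ij :
  Rinv d P z1 (Rmap (Ftilde d P) z1 z2) ij = z2 ij.
Proof. by case: ij => i j; rewrite /Rmap /Ftilde /join /Rinv /= subrK. Qed.
Lemma meval_cat (C : numClosedFieldType) (I : finType) (p q : mpoly C I) x :
  meval (p ++ q) x = meval p x + meval q x.
Proof. by rewrite /meval big_cat. Qed.

Lemma pl_add (C : numClosedFieldType) (I : finType) d (f g : (I -> C) -> C) :
  polyfun_le d f -> polyfun_le d g -> polyfun_le d (fun x => f x + g x).
Proof.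
move=> [p [hp ep]] [q [hq eq]]; exists (p ++ q); split.
  by move: hp hq; rewrite /mdeg_le all_cat => -> ->.
by move=> x; rewrite meval_cat ep eq.
Qed.

Lemma pl_scale (C : numClosedFieldType) (I : finType) d (c : C) (f : (I -> C) -> C) :
  polyfun_le d f -> polyfun_le d (fun x => c * f x).
Proof.
move=> [p [hp ep]]; exists [seq (c * t.1, t.2) | t <- p]; split.
  by rewrite /mdeg_le all_map.
by move=> x; rewrite ep /meval big_map mulr_sumr; apply: eq_bigr => t _; rewrite mulrA.
Qed.

Lemma pl_const (C : numClosedFieldType) (I : finType) d (c : C) :
  polyfun_le d (fun _ : I -> C => c).
Proof.
exists [:: (c, [ffun _ => 0%N])]; split.
  by rewrite /mdeg_le /= andbT /mdeg big1 // => i _; rewrite ffunE.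
by move=> x; rewrite /meval big_cons big_nil addr0 big1 ?mulr1 // => i _; rewrite ffunE expr0.
Qed.

Lemma pl_ext (C : numClosedFieldType) (I : finType) d (f g : (I -> C) -> C) :
  (forall x, f x = g x) -> polyfun_le d f -> polyfun_le d g.
Proof. by move=> e [p [hp ep]]; exists p; split => // x; rewrite -e. Qed.

Lemma pl_sum (C : numClosedFieldType) (I : finType) d (T : Type) (r : seq T)
  (fs : T -> (I -> C) -> C) :
  (forall i, polyfun_le d (fs i)) -> polyfun_le d (fun x => \sum_(i <- r) fs i x).
Proof.
move=> h; elim: r => [|a r ih].
  by apply: pl_ext (pl_const I d 0) => x; rewrite big_nil.
by apply: pl_ext (pl_add (h a) ih) => x; rewrite big_cons.
Qed.


Lemma pl_mono (C : numClosedFieldType) (I : finType) d (e : {ffun I -> nat}) :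
  (mdeg e <= d)%N -> polyfun_le d (fun x : I -> C => \prod_(i : I) x i ^+ e i).
Proof.
move=> h; exists [:: (1, e)]; split; first by rewrite /mdeg_le /= h.
by move=> x; rewrite /meval big_cons big_nil addr0 mul1r.
Qed.

Lemma prod_ind (C : numClosedFieldType) (I : finType) (x : I -> C) (a : I) :
  \prod_(v : I) x v ^+ (v == a) = x a.
Proof.
rewrite (bigD1 a) //= eqxx expr1 big1 ?mulr1 // => v /negbTE ->; exact: expr0.
Qed.

Lemma sum_ind (I : finType) (a : I) : (\sum_(v : I) (v == a) = 1)%N.
Proof. by rewrite (bigD1 a) //= eqxx big1 ?addn0 // => v /negbTE ->. Qed.

Lemma pl_var (C : numClosedFieldType) (I : finType) d (a : I) :
  (1 <= d)%N -> polyfun_le d (fun x : I -> C => x a).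
Proof.
move=> d1; apply: pl_ext (@pl_mono C I d ([ffun v => (v == a) : nat]) _) => [x|].
  by rewrite -[RHS](prod_ind x a); apply: eq_bigr => v _; rewrite ffunE.
rewrite /mdeg (eq_bigr (fun v => (v == a) : nat)) ?sum_ind // => v _; by rewrite ffunE.
Qed.

Lemma pl_var2 (C : numClosedFieldType) (I : finType) d (a b : I) :
  (2 <= d)%N -> polyfun_le d (fun x : I -> C => x a * x b).
Proof.
move=> d2; apply: pl_ext (@pl_mono C I d ([ffun v => ((v == a) + (v == b))%N]) _) => [x|].
  rewrite -(prod_ind x a) -(prod_ind x b) -big_split; apply: eq_bigr => v _.
  by rewrite ffunE exprD.
rewrite /mdeg (eq_bigr (fun v => ((v == a) + (v == b))%N)) => [|v _]; last by rewrite ffunE.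
by rewrite big_split /= !sum_ind.
Qed.

Lemma pf_of_pl (C : numClosedFieldType) (I : finType) d (f : (I -> C) -> C) :
  polyfun_le d f -> polyfun f.
Proof. by move=> [p [_ ep]]; exists p. Qed.

Lemma pf_ext (C : numClosedFieldType) (I : finType) (f g : (I -> C) -> C) :
  (forall x, f x = g x) -> polyfun f -> polyfun g.
Proof. by move=> e [p ep]; exists p => x; rewrite -e. Qed.

Lemma pf_add (C : numClosedFieldType) (I : finType) (f g : (I -> C) -> C) :
  polyfun f -> polyfun g -> polyfun (fun x => f x + g x).
Proof. by move=> [p ep] [q eq]; exists (p ++ q) => x; rewrite meval_cat ep eq. Qed.

Lemma pf_const (C : numClosedFieldType) (I : finType) (c : C) : polyfun (fun _ : I -> C => c).
Proof. exact: pf_of_pl (pl_const I 0 c). Qed.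

Lemma pf_var (C : numClosedFieldType) (I : finType) (a : I) : polyfun (fun x : I -> C => x a).
Proof. exact: pf_of_pl (@pl_var C I 1%N a isT). Qed.

Lemma pf_mul (C : numClosedFieldType) (I : finType) (f g : (I -> C) -> C) :
  polyfun f -> polyfun g -> polyfun (fun x => f x * g x).
Proof.
move=> [p ep] [q eq].
exists [seq (ab.1.1 * ab.2.1, [ffun i => (ab.1.2 i + ab.2.2 i)%N]) | ab : (C * {ffun I -> nat}) * (C * {ffun I -> nat}) <- [seq (a, b) | a <- p, b <- q]].
move=> x; rewrite ep eq /meval big_map big_allpairs mulr_suml; apply: eq_bigr => a _.
rewrite mulr_sumr; apply: eq_bigr => b _ /=.
rewrite [in RHS](eq_bigr (fun i => x i ^+ a.2 i * x i ^+ b.2 i)) => [|i _]; last by rewrite ffunE exprD.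
rewrite [in RHS]big_split /=.
by rewrite -!mulrA; congr (_ * _); rewrite mulrCA.
Qed.

Lemma pf_sum (C : numClosedFieldType) (I : finType) (T : Type) (r : seq T)
  (fs : T -> (I -> C) -> C) :
  (forall i, polyfun (fs i)) -> polyfun (fun x => \sum_(i <- r) fs i x).
Proof.
move=> h; elim: r => [|a r ih].
  by apply: pf_ext (pf_const I 0) => x; rewrite big_nil.
by apply: pf_ext (pf_add (h a) ih) => x; rewrite big_cons.
Qed.

Lemma pf_prod (C : numClosedFieldType) (I : finType) (T : Type) (r : seq T)
  (fs : T -> (I -> C) -> C) :
  (forall i, polyfun (fs i)) -> polyfun (fun x => \prod_(i <- r) fs i x).
Proof.
move=> h; elim: r => [|a r ih].
  by apply: pf_ext (pf_const I 1) => x; rewrite big_nil.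
by apply: pf_ext (pf_mul (h a) ih) => x; rewrite big_cons.
Qed.

Lemma pf_expr (C : numClosedFieldType) (I : finType) (f : (I -> C) -> C) m :
  polyfun f -> polyfun (fun x => f x ^+ m).
Proof.
move=> h; elim: m => [|m ih].
  by apply: pf_ext (pf_const I 1) => x; rewrite expr0.
by apply: pf_ext (pf_mul h ih) => x; rewrite exprS.
Qed.

Lemma pf_comp (C : numClosedFieldType) (I J : finType) (q : mpoly C J)
  (h : J -> (I -> C) -> C) :
  (forall k, polyfun (h k)) -> polyfun (fun y => meval q (fun k => h k y)).
Proof.
move=> hh; apply: pf_sum => t; apply: pf_mul; first exact: pf_const.
by apply: pf_prod => i; apply: pf_expr.
Qed.
Definition liftE (n : nat) (e : {ffun 'I_n -> nat}) : {ffun Tn n -> nat} :=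
  [ffun v => match v with inl k => e k | inr _ => 0%N end].

Lemma mdeg_liftE n (e : {ffun 'I_n -> nat}) : mdeg (liftE e) = mdeg e.
Proof.
rewrite /mdeg /Tn big_sumType /= [X in (_ + X)%N]big1 ?addn0 => [|v _]; last by rewrite ffunE.
by apply: eq_bigr => k _; rewrite ffunE.
Qed.

Lemma prod_liftE (C : numClosedFieldType) n (e : {ffun 'I_n -> nat}) (z : Tn n -> C) :
  \prod_(v : Tn n) z v ^+ liftE e v = \prod_(k : 'I_n) z (inl k) ^+ e k.
Proof.
rewrite /Tn big_sumType /= [X in _ * X]big1 ?mulr1 => [|v _]; last by rewrite ffunE expr0.
by apply: eq_bigr => k _; rewrite ffunE.
Qed.

Lemma mdeg_deriv (I : finType) (e : {ffun I -> nat}) l :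
  e l != 0%N -> (mdeg [ffun i => if i == l then (e i).-1 else e i]).+1 = mdeg e.
Proof.
move=> el; rewrite /mdeg (bigD1 l) //= [in RHS](bigD1 l) //= ffunE eqxx.
rewrite (eq_bigr (fun i => e i)) => [|i /negbTE ne]; last by rewrite ffunE ne.
by rewrite -addSn prednK // lt0n.
Qed.

Lemma pl_deriv_lift (C : numClosedFieldType) n d (q : mpoly C 'I_n) l :
  mdeg_le d.+1 q ->
  polyfun_le d (fun z : Tn n -> C => meval (mderiv l q) (fun k => z (inl k))).
Proof.
move=> hq.
exists [seq (t.1, liftE t.2) | t <- [seq t <- mderiv l q | t.1 != 0]]; split.
  rewrite /mdeg_le all_map all_filter /mderiv all_map.
  apply/allP => t tq; move/allP: hq => /(_ t tq) ht /=.
  apply/implyP => nz; rewrite mdeg_liftE.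
  have el : t.2 l != 0%N by apply: contraNneq nz => ->; rewrite mulr0n.
  by rewrite -ltnS (mdeg_deriv el).
move=> z; symmetry; rewrite /meval big_map big_filter big_mkcond /=; apply: eq_bigr => t _.
rewrite prod_liftE; case: eqP => [->|] //; by rewrite mul0r.
Qed.

Lemma mdeg_le_filter (C : numClosedFieldType) (I : finType) N (p : mpoly C I) (Q : pred (C * {ffun I -> nat})) :
  mdeg_le N p -> mdeg_le N (filter Q p).
Proof.
rewrite /mdeg_le all_filter => /allP h; apply/allP => t tp /=; apply/implyP => _; exact: h.
Qed.

Lemma pl_dsum (C : numClosedFieldType) (n d : nat) (P : 'I_n -> mpoly C 'I_n)
  (hP : forall i, mdeg_le d.+1 (P i)) i j :
  polyfun_le d (fun z : Tn n -> C => dsum d P i j (fun k => z (inl k))).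
Proof.
apply: pl_sum => c; apply: pl_scale; apply: pl_deriv_lift; exact: mdeg_le_filter.
Qed.

Lemma part1 (C : numClosedFieldType) (n d : nat) (P : 'I_n -> mpoly C 'I_n)
  (hd : (2 <= d)%N) (hP : forall i, mdeg_le d.+1 (P i)) :
  polymap_le d (Ftilde d P).
Proof.
move=> [j | [j l]] /=.
  by apply: pl_sum => k; apply: pl_var2.
have h1 : (1 <= d)%N by apply: leq_trans hd.
have := pl_add (@pl_var C (Tn n) d (inr (j, l)) h1) (pl_scale (-1) (pl_dsum hP j l)).
apply: pl_ext => x /=.
by rewrite mulN1r.
Qed.
Definition Dds (C : numClosedFieldType) (n d : nat) (P : 'I_n -> mpoly C 'I_n) (j l i : 'I_n)
  (z1 : 'I_n -> C) : C :=
  \sum_(1 <= c < d.+2) (c%:R)^-1 * meval (mderiv i (mderiv l (mhom c (P j)))) z1.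

Lemma isD_dsum (C : numClosedFieldType) (n d : nat) (P : 'I_n -> mpoly C 'I_n) j l i :
  isD i (dsum d P j l) (Dds d P j l i).
Proof.
apply: isD_ext (isD_sum _ (fun c => isD_scale (c%:R)^-1 (isD_meval i (mderiv l (mhom c (P j)))))) => //.
Qed.

Lemma isD_inl (C : numClosedFieldType) n (g g' : ('I_n -> C) -> C) i :
  isD i g g' -> isD (inl i : Tn n) (fun z => g (fun k => z (inl k))) (fun z => g' (fun k => z (inl k))).
Proof.
move=> h z; have [q [e1 e2]] := h (fun k => z (inl k)); exists q; split => //.
Qed.

Lemma isD_inr_indep (C : numClosedFieldType) n (g : ('I_n -> C) -> C) p :
  isD (inr p : Tn n) (fun z => g (fun k => z (inl k))) (fun _ => 0).
Proof.
by apply: isD_indep => z t.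
Qed.

Definition Ejac (C : numClosedFieldType) (n d : nat) (P : 'I_n -> mpoly C 'I_n)
  (v w : Tn n) (z : Tn n -> C) : C :=
  match w with
  | inl j => \sum_(l < n) (((inr (j, l) : Tn n) == v)%:R * z (inl l) +
                           z (inr (j, l)) * (((inl l : Tn n) == v)%:R))
  | inr (j, l) => ((inr (j, l) : Tn n) == v)%:R -
      match v with inl i => Dds d P j l i (fun k => z (inl k)) | inr _ => 0 end
  end.

Lemma isD_Ft (C : numClosedFieldType) (n d : nat) (P : 'I_n -> mpoly C 'I_n) v w :
  isD v (fun z => Ftilde d P z w) (Ejac d P v w).
Proof.
case: w => [j | [j l]] /=.
  apply: isD_ext (isD_sum _ (fun l => isD_mul (isD_var v (inr (j, l))) (isD_var v (inl l)))) => //.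
case: v => [i | p].
  apply: isD_ext (isD_add (isD_var (inl i) (inr (j, l)))
                  (isD_scale (-1) (isD_inl (isD_dsum d P j l i)))) => x; by rewrite mulN1r.
apply: isD_ext (isD_add (isD_var (inr p) (inr (j, l)))
                  (isD_scale (-1) (isD_inr_indep (dsum d P j l) p))) => x; by rewrite ?mulN1r ?mulr0.
Qed.

Lemma jac_entry (C : numClosedFieldType) (n d : nat) (P : 'I_n -> mpoly C 'I_n)
  (Pt : Tn n -> mpoly C (Tn n)) : is_rep Pt (Ftilde d P) ->
  forall v w z, meval (mderiv v (Pt w)) z = Ejac d P v w z.
Proof.
move=> hPt v w z; apply: isD_uniq (isD_Ft d P v w) z.
by apply: isD_ext (isD_meval v (Pt w)) => // x; rewrite hPt.
Qed.

Lemma jac_entry_F (C : numClosedFieldType) (n : nat) (P P0 : 'I_n -> mpoly C 'I_n) :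
  is_rep P0 (fun z i => meval (P i) z) ->
  forall i j z, meval (mderiv i (P0 j)) z = meval (mderiv i (P j)) z.
Proof.
move=> h i j z; apply: isD_uniq (isD_meval i (P j)) z.
by apply: isD_ext (isD_meval i (P0 j)) => // x; rewrite h.
Qed.
Definition hT n (a : 'I_(n + #|{: 'I_n * 'I_n}|)) : Tn n :=
  match split a with inl i => inl i | inr k => inr (enum_val k) end.
Definition hTinv n (v : Tn n) : 'I_(n + #|{: 'I_n * 'I_n}|) :=
  unsplit (match v with inl i => inl i | inr p => inr (enum_rank p) end).

Lemma hT_bij n : bijective (@hT n).
Proof.
exists (@hTinv n).
  move=> a; rewrite /hT /hTinv; case E: (split a) => [i|k]; rewrite -[RHS]splitK E //.
  by rewrite enum_valK.
by move=> [i|p]; rewrite /hTinv /hT unsplitK ?enum_rankK.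
Qed.

Lemma hT_block (C : numClosedFieldType) n (f : Tn n -> Tn n -> C) :
  \matrix_(a, b) f (hT a) (hT b) =
  block_mx (\matrix_(i, j) f (inl i) (inl j)) (\matrix_(i, k) f (inl i) (inr (enum_val k)))
           (\matrix_(k, j) f (inr (enum_val k)) (inl j))
           (\matrix_(k, k') f (inr (enum_val k)) (inr (enum_val k'))).
Proof.
have sl : forall m k (i : 'I_m), split (lshift k i) = inl i by move=> m k i; exact: (unsplitK (inl i)).
have sr : forall m k (i : 'I_k), split (rshift m i) = inr i by move=> m k i; exact: (unsplitK (inr i)).
apply/matrixP => a b; rewrite -[a]splitK -[b]splitK.
case: (split a) => i; case: (split b) => j;
  by rewrite /= ?block_mxEul ?block_mxEur ?block_mxEdl ?block_mxEdr !mxE /hT ?sl ?sr.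
Qed.

Lemma det_schur (C : numClosedFieldType) n1 n2 (A : 'M[C]_n1) (B : 'M_(n1, n2)) (D : 'M_(n2, n1)) :
  \det (block_mx A B D 1%:M) = \det (A - B *m D).
Proof.
have -> : block_mx A B D 1%:M = block_mx 1%:M B 0 1%:M *m block_mx (A - B *m D) 0 D 1%:M.
  by rewrite mulmx_block !mul1mx !mul0mx !mulmx1 ?mulmx0 !add0r ?addr0 subrK.
by rewrite det_mulmx det_ublock det_lblock !det_scalar !expr1n !mul1r mulr1.
Qed.
Lemma inr_eq (A B : eqType) (x y : B) : ((inr x : (A + B)%type) == inr y) = (x == y).
Proof. by []. Qed.
Lemma inl_eq (A B : eqType) (x y : A) : ((inl x : (A + B)%type) == inl y) = (x == y).
Proof. by []. Qed.
Lemma inlr_eq (A B : eqType) (x : A) (y : B) : ((inl x : (A + B)%type) == inr y) = false.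
Proof. by []. Qed.
Lemma inrl_eq (A B : eqType) (x : A) (y : B) : ((inr y : (A + B)%type) == inl x) = false.
Proof. by []. Qed.

Lemma sum_mul_ind (C : numClosedFieldType) (I : finType) (F : I -> C) i :
  \sum_(l : I) F l * (l == i)%:R = F i.
Proof. by rewrite (bigD1 i) //= eqxx mulr1 big1 ?addr0 // => l /negbTE ->; rewrite mulr0. Qed.

Lemma sum_ind_mul (C : numClosedFieldType) (I : finType) (F : I -> C) i :
  \sum_(l : I) (l == i)%:R * F l = F i.
Proof. by rewrite (bigD1 i) //= eqxx mul1r big1 ?addr0 // => l /negbTE ->; rewrite mul0r. Qed.

Lemma deriv_F (C : numClosedFieldType) (n d : nat) (P : 'I_n -> mpoly C 'I_n)
  (hP : forall i, mdeg_le d.+1 (P i)) (h0 : forall i, meval (P i) (fun _ => 0) = 0) i j z1 :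
  meval (mderiv i (P j)) z1 = dsum d P j i z1 + \sum_(l < n) z1 l * Dds d P j l i z1.
Proof.
have HD : isD i (meval (P j)) (fun z => dsum d P j i z + \sum_(l < n) z l * Dds d P j l i z).
  apply: isD_ext (isD_sum _ (fun l => isD_mul (isD_var i l) (isD_dsum d P j l i))) => z.
    exact: euler_dsum.
  by rewrite big_split /= sum_ind_mul.
exact: (isD_uniq (isD_meval i (P j)) HD z1).
Qed.

Lemma key (C : numClosedFieldType) (n d : nat) (P : 'I_n -> mpoly C 'I_n)
  (hP : forall i, mdeg_le d.+1 (P i)) (h0 : forall i, meval (P i) (fun _ => 0) = 0)
  (P0 : 'I_n -> mpoly C 'I_n) (hP0 : is_rep P0 (fun z i => meval (P i) z))
  (Pt : Tn n -> mpoly C (Tn n)) (hPt : is_rep Pt (Ftilde d P)) z1 :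
  jacdet Pt (join z1 (Rinv d P z1 (fun _ => 0))) = jacdet P0 z1.
Proof.
set zz := join z1 (Rinv d P z1 (fun _ => 0)).
rewrite /jacdet.
have -> : \matrix_(a < #|Tn n|, b < #|Tn n|) meval (mderiv (enum_val a) (Pt (enum_val b))) zz =
          \matrix_(a < #|Tn n|, b < #|Tn n|) Ejac d P (enum_val a) (enum_val b) zz.
  by apply/matrixP => a b; rewrite !mxE (jac_entry hPt).
rewrite (det_reindex (fun v w => Ejac d P v w zz) (@enum_val_bij (Tn n)) (hT_bij n)).
rewrite (hT_block (fun v w => Ejac d P v w zz)).
have -> : \matrix_(k < #|{: 'I_n * 'I_n}|, k' < #|{: 'I_n * 'I_n}|)
   Ejac d P (inr (enum_val k)) (inr (enum_val k')) zz = 1%:M.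
  apply/matrixP => k k'; rewrite !mxE /Ejac.
  case E: (enum_val k') => [a b] /=; rewrite subr0 -E inr_eq (inj_eq enum_val_inj) eq_sym //.
rewrite det_schur.
have bid : bijective (@id 'I_n) by exists id.
rewrite (det_reindex (fun a b => meval (mderiv a (P0 b)) z1) (@enum_val_bij 'I_n) bid).
congr (\det _); apply/matrixP => i j; rewrite !mxE.
rewrite (jac_entry_F hP0) (deriv_F hP h0).
have EA : Ejac d P (inl i) (inl j) zz = dsum d P j i z1.
  rewrite /Ejac (eq_bigr (fun l => zz (inr (j, l)) * (l == i)%:R)) => [|l _]; last first.
    by rewrite inrl_eq inl_eq mul0r add0r.
  by rewrite sum_mul_ind /zz /join /Rinv /= add0r.
have EB : forall a b, Ejac d P (inl i) (inr (a, b)) zz = - Dds d P a b i z1.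
  by move=> a b; rewrite /Ejac inrl_eq sub0r.
have ED : forall a b, Ejac d P (inr (a, b)) (inl j) zz = (a == j)%:R * z1 b.
  move=> a b; rewrite /Ejac (eq_bigr (fun l => (a == j)%:R * ((l == b)%:R * z1 l))) => [|l _].
    by rewrite -mulr_sumr sum_ind_mul.
  rewrite inlr_eq mulr0 addr0 inr_eq xpair_eqE [j == a]eq_sym.
  by case: (a == j) => /=; rewrite ?mul1r ?mul0r.
rewrite EA.
have ES : \sum_(k < #|{: 'I_n * 'I_n}|)
    (\matrix_(i, k) Ejac d P (inl i) (inr (enum_val k)) zz) i k *
    (\matrix_(k, j) Ejac d P (inr (enum_val k)) (inl j) zz) k j =
    \sum_(p : 'I_n * 'I_n) Ejac d P (inl i) (inr (p.1, p.2)) zz * Ejac d P (inr (p.1, p.2)) (inl j) zz.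
  transitivity (\sum_(k < #|{: 'I_n * 'I_n}|)
     (fun p => Ejac d P (inl i) (inr p) zz * Ejac d P (inr p) (inl j) zz) (enum_val k)).
    by apply: eq_bigr => k _; rewrite !mxE.
  rewrite -(big_enum_val (A := {: 'I_n * 'I_n})
     (fun p => Ejac d P (inl i) (inr p) zz * Ejac d P (inr p) (inl j) zz)).
  by apply: eq_big => [p|[a b] _]; rewrite ?inE.
rewrite ES -(pair_bigA _ (fun a b => Ejac d P (inl i) (inr (a, b)) zz * Ejac d P (inr (a, b)) (inl j) zz)).
rewrite (eq_bigr (fun a => (a == j)%:R * \sum_b (- Dds d P a b i z1 * z1 b))) => [|a _]; last first.
  by rewrite mulr_sumr; apply: eq_bigr => b _; rewrite EB ED mulrCA.
rewrite sum_ind_mul (eq_bigr (fun b => - (z1 b * Dds d P j b i z1))) => [|b _]; last first.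
  by rewrite mulNr mulrC.
by rewrite sumrN opprK.
Qed.
Lemma zeq (C : numClosedFieldType) (n d : nat) (P : 'I_n -> mpoly C 'I_n) (z : Tn n -> C) :
  (forall b, Ftilde d P z (inr b) = 0) ->
  z = join (fun k => z (inl k)) (Rinv d P (fun k => z (inl k)) (fun _ => 0)).
Proof.
move=> hz; apply: functional_extensionality => [[a|b]] //=.
move: (hz b); case: b => i j /= /eqP; rewrite subr_eq0 => /eqP ->.
by rewrite /Rinv add0r.
Qed.

Lemma Jaut_R (C : numClosedFieldType) (n d : nat) (P : 'I_n -> mpoly C 'I_n) z1 :
  Jaut (Rmap (Ftilde d P) z1).
Proof.
split.
  move=> [i j].
  have := pf_add (@pf_var C _ (i, j)) (pf_const _ (- dsum d P i j z1)).
  apply: pf_ext => x //.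
exists (Rinv d P z1); split.
  move=> [i j].
  have := pf_add (@pf_var C _ (i, j)) (pf_const _ (dsum d P i j z1)).
  apply: pf_ext => x //.
split => [x v | y v]; [exact: part2b | exact: part2a].
Qed.

Unset Implicit Arguments.
Theorem mainTheorem4 (C : numClosedFieldType) (n d : nat)
  (hn : (1 <= n)%N) (hd : (2 <= d)%N)
  (P : 'I_n -> mpoly C 'I_n)
  (hP : forall i, mdeg_le d.+1 (P i))
  (h0 : forall i, meval (P i) (fun _ => 0) = 0) :
  let F := fun (z : 'I_n -> C) (i : 'I_n) => meval (P i) z in
  let Ft := Ftilde d P in
  [/\ polymap_le d Ft,
      (forall z1, (forall y2 ij, Rmap Ft z1 (Rinv d P z1 y2) ij = y2 ij) /\
                  (forall z2 ij, Rinv d P z1 (Rmap Ft z1 z2) ij = z2 ij)),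
      (forall z1 i, Ft (join z1 (Rinv d P z1 (fun _ => 0))) (inl i) = F z1 i),
      (Jlin F <-> Jlin_split d Ft) &
      (Jaut F <-> J_split d Ft)].
Proof.
move=> F Ft.
have p1 : polymap_le d Ft := part1 hd hP.
have p3 : forall z1 i, Ft (join z1 (Rinv d P z1 (fun _ => 0))) (inl i) = F z1 i := part3 hP h0.
split => //.
- by move=> z1; split => *; [exact: part2a | exact: part2b].
- split.
    move=> [P0 [hP0 [c [c0 hc]]]]; split => //; first by move=> z1; exact: Jaut_R.
    have [Pt hPt] := fin_all_exists p1.
    exists Pt; split; first by move=> x j; case: (hPt j) => _ h; exact: h.
    exists c; split => // z1 z2 hz.
    have ez : z2 = Rinv d P z1 (fun _ => 0).
      apply: functional_extensionality => ij.
      by rewrite -[LHS](part2b d P z1 z2 ij) /Rinv hz.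
    rewrite ez (key hP h0 hP0) ?hc // => x j; by case: (hPt j) => _ h; exact: h.
  move=> [_ _ [Pt [hPt [c [c0 hc]]]]].
  exists P; split => //; exists c; split => // z1.
  rewrite -(key hP h0 (P0 := P) _ hPt z1) //; apply: hc => b; exact: part2a.
- split.
    move=> [pF [H [pH [HF FH]]]]; split => //; first by move=> z1; exact: Jaut_R.
    exists (fun y1 => join (H y1) (Rinv d P (H y1) (fun _ => 0))); split.
      move=> [a | [i j]] /=; first exact: pH.
      apply: pf_ext (pf_add (pf_const _ 0) (pf_sum _ (fun c => pf_mul (pf_const _ ((c%:R)^-1))
                (pf_comp (mderiv j (mhom c (P i))) pH)))) => x //.
    split.
      move=> y1 [a | b]; first by have h := p3 (H y1) a; rewrite FH in h; exact: h.
      exact: (part2a d P (H y1) (fun _ => 0) b).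
    move=> z hz v.
    have ez := zeq hz.
    set z1 := fun k => z (inl k).
    have e1 : (fun a => Ft z (inl a)) = F z1.
      by apply: functional_extensionality => a; rewrite -p3 -ez.
    have e2 : H (F z1) = z1 by apply: functional_extensionality => k; rewrite HF.
    by rewrite e1 /= e2 [in RHS]ez.
  move=> [_ _ [G [pG [GF FG]]]]; split.
    by move=> i; exists (P i).
  exists (fun y a => G y (inl a)); split; first by move=> a; exact: pG (inl a).
  split.
    move=> x v.
    have h := FG (join x (Rinv d P x (fun _ => 0))) (fun b => part2a d P x _ b) (inl v).
    have e : (fun a => Ft (join x (Rinv d P x (fun _ => 0))) (inl a)) = F x.
      by apply: functional_extensionality => a; rewrite p3.
    by rewrite e in h; exact: h.
  move=> y v.
  have hz : forall b, Ft (G y) (inr b) = 0 by move=> b; rewrite GF.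
  have ez := zeq hz.
  by rewrite -p3 -ez GF.
Qed.
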